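(* Let $f:\mathbb{N}\to\mathbb{R}$ satisfy $f\in\Omega(\ell)$, i.e., there are $\gamma>0$ and $\ell_0$ with $f(\ell)\ge\gamma\ell$ for all $\ell\ge\ell_0$. Then there is a constant $\delta>0$ (depending only on $f$) such that for every instance $(A,C,k)$ and every committee $W$ that is affordable and $f$-representative, every AV-completion of $W$ has utilitarian ratio at least $\delta/\sqrt{k}$.
   Context: An instance $(A,C,k)$ consists of a finite nonempty candidate set $C$, voters $N=\{1,\dots,n\}$, approval sets $A_i\subseteq C$, and a committee size $1\le k\le |C|$. $N_c=\{i: c\in A_i\}$. A committee is $W\subseteq C$ with $|W|\le k$. $\mathrm{sw}(W)=\sum_i|A_i\cap W|$; the utilitarian ratio of $W$ is $\mathrm{sw}(W)/\max\{\mathrm{sw}(W'):|W'|=k\}$. An AV-completion of $W$ is $W\cup T$ where $T\subseteq C\setminus W$, $|T|=k-|W|$, and $T$ maximizes $\sum_{c\in T}|N_c|$ among such sets. $W$ is affordable if there are $p_i:C\to\mathbb{R}_{\ge0}$ with $p_i(c)=0$ for $c\notin A_i$, $\sum_c p_i(c)\le k/n$, $\sum_i p_i(c)=1$ for $c\in W$, $\sum_i p_i(c)=0$ for $c\notin W$. $W$ is $f$-representative if for every $c\notin W$, every $\ell\in\{1,\dots,k\}$ and every $N'\subseteq N_c$ with $|N'|\ge \ell n/k$, $\frac{1}{|N'|}\sum_{i\in N'}|A_i\cap W|\ge f(\ell)$. *)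

(* Defs.v *)
From HB Require Import structures.
From mathcomp Require Import all_boot all_order all_algebra.
From mathcomp Require Import reals.
Set Implicit Arguments. Unset Strict Implicit. Unset Printing Implicit Defensive.
Import Order.TTheory GRing.Theory Num.Theory.
Local Open Scope ring_scope.

Definition supporters (C : finType) (n : nat) (A : 'I_n -> {set C}) (c : C)
  : {set 'I_n} := [set i | c \in A i].

Definition sw (C : finType) (n : nat) (A : 'I_n -> {set C}) (W : {set C}) : nat :=
  (\sum_(i < n) #|A i :&: W|)%N.

Definition opt_sw (C : finType) (n : nat) (A : 'I_n -> {set C}) (k : nat) : nat :=
  (\max_(W' : {set C} | #|W'| == k) sw A W')%N.

Definition av_score (C : finType) (n : nat) (A : 'I_n -> {set C}) (T : {set C}) : nat :=
  (\sum_(c in T) #|supporters A c|)%N.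

Definition AV_completion (C : finType) (n : nat) (A : 'I_n -> {set C}) (k : nat)
  (W W2 : {set C}) : Prop :=
  exists T : {set C},
    [/\ W2 = W :|: T, T \subset ~: W, #|T| = (k - #|W|)%N &
      forall T' : {set C}, T' \subset ~: W -> #|T'| = (k - #|W|)%N ->
        (av_score A T' <= av_score A T)%N].

Definition affordable (R : realType) (C : finType) (n : nat) (A : 'I_n -> {set C})
  (k : nat) (W : {set C}) : Prop :=
  exists p : 'I_n -> C -> R,
    [/\ forall i c, 0 <= p i c,
        forall i c, c \notin A i -> p i c = 0,
        forall i, \sum_(c : C) p i c <= k%:R / n%:R,
        forall c, c \in W -> \sum_(i < n) p i c = 1 &
        forall c, c \notin W -> \sum_(i < n) p i c = 0].

Definition f_representative (R : realType) (f : nat -> R) (C : finType) (n : nat)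
  (A : 'I_n -> {set C}) (k : nat) (W : {set C}) : Prop :=
  forall c : C, c \notin W ->
  forall l : nat, (1 <= l <= k)%N ->
  forall N' : {set 'I_n}, N' \subset supporters A c ->
    (l%:R * n%:R / k%:R : R) <= #|N'|%:R ->
    f l <= (#|N'|%:R)^-1 * (\sum_(i in N') #|A i :&: W|)%:R.

(* Main.v *)
Require Import Defs.
From HB Require Import structures.
From mathcomp Require Import all_boot all_order all_algebra.
From mathcomp Require Import reals.
From mathcomp Require Import zify lra.
Import Order.TTheory GRing.Theory Num.Theory.

Lemma sum_sub (T : finType) (A B : {set T}) (F : T -> nat) :
  A \subset B -> (\sum_(i in A) F i <= \sum_(i in B) F i)%N.
Proof.
move=> AB; rewrite [in X in (_ <= X)%N](big_setID A) /=.
have -> : B :&: A = A by apply/setIidPr.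
exact: leq_addr.
Qed.

Lemma sum_union (T : finType) (X P : {set T}) (F : T -> nat) :
  [disjoint X & P] -> (\sum_(i in X :|: P) F i = \sum_(i in X) F i + \sum_(i in P) F i)%N.
Proof.
move=> d; rewrite (big_setID X) /=.
have -> : (X :|: P) :&: X = X by apply/setIidPr; apply: subsetUl.
have -> : (X :|: P) :\: X = P; last by [].
apply/setP => x; rewrite !inE; case xX: (x \in X); rewrite ?orbF //=.
case xP: (x \in P) => //.
by have := disjoint_setI0 d; move/setP/(_ x); rewrite !inE xX xP.
Qed.

Lemma sub_card (T : finType) (A : {set T}) (m : nat) :
  (m <= #|A|)%N -> exists B : {set T}, B \subset A /\ #|B| = m.
Proof.
elim: m => [|m IH] H.
  by exists set0; rewrite sub0set cards0.
have [B [BA cB]] := IH (ltnW H).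
have : (0 < #|A :\: B|)%N.
  rewrite cardsD; have : (#|A :&: B| <= #|B|)%N by apply: subset_leq_card; apply: subsetIr.
  lia.
case/card_gt0P => x; rewrite in_setD => /andP [xB xA].
exists (x |: B); split.
  by rewrite subUset sub1set xA BA.
by rewrite cardsU1 xB cB.
Qed.

Lemma sw_av (C : finType) (n : nat) (A : 'I_n -> {set C}) (X : {set C}) :
  sw A X = av_score A X.
Proof.
rewrite /sw /av_score.
have E : forall i, #|A i :&: X| = (\sum_(c in X) (c \in A i))%N.
  move=> i; rewrite -sum1_card big_mkcond [RHS]big_mkcond /=.
  by apply: eq_bigr => c _; rewrite !inE; case: (c \in A i); case: (c \in X).
transitivity (\sum_(i < n) \sum_(c in X) (c \in A i))%N; first by apply: eq_bigr => i _; exact: E.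
rewrite exchange_big /=; apply: congr_big => // c _.
rewrite -sum1_card [RHS]big_mkcond /=; apply: eq_bigr => i _.
by rewrite inE; case: (c \in A i).
Qed.

Lemma av_bound (C : finType) (n : nat) (A : 'I_n -> {set C}) (W Y : {set C}) :
  Y \subset ~: W ->
  (av_score A Y <= #|Y| * \max_(c | c \notin W) #|supporters A c|)%N.
Proof.
move=> YW; rewrite /av_score -sum_nat_const; apply: leq_sum => c cY.
apply: leq_bigmax_cond.
by have := subsetP YW c cY; rewrite inE.
Qed.

Lemma opt_bound (C : finType) (n : nat) (A : 'I_n -> {set C}) (k : nat)
  (W T : {set C}) :
  (k <= #|C|)%N -> (#|W| <= k)%N ->
  T \subset ~: W -> #|T| = (k - #|W|)%N ->
  (forall T' : {set C}, T' \subset ~: W -> #|T'| = (k - #|W|)%N ->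
        (av_score A T' <= av_score A T)%N) ->
  (opt_sw A k <= av_score A W + av_score A T +
     #|W| * \max_(c | c \notin W) #|supporters A c|)%N.
Proof.
move=> kC Wk TW cT Topt.
set s := \max_(c | c \notin W) _.
apply/bigmax_leqP => W' /eqP cW'.
rewrite sw_av /av_score (big_setID W) /=.
have H1 : (\sum_(i in W' :&: W) #|supporters A i| <= av_score A W)%N.
  by apply: sum_sub; apply: subsetIr.
set Z := W' :\: W.
have ZW : Z \subset ~: W by apply/subsetP => x; rewrite !inE => /andP[-> _].
have cZ : (#|Z| <= k)%N by rewrite -cW'; apply: subset_leq_card; apply: subsetDl.
set m := minn #|Z| (k - #|W|).
have [X [XZ cX]] := @sub_card _ Z m ltac:(rewrite /m; lia).
have XW : X \subset ~: W by apply: subset_trans ZW.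
have cWX : (k - #|W| - m <= #|~: W :\: X|)%N.
  rewrite cardsD; have -> : ~: W :&: X = X by apply/setIidPr.
  have := cardsC W; lia.
have [P [PWX cP]] := @sub_card _ _ _ cWX.
have XP : [disjoint X & P].
  rewrite -setI_eq0; apply/eqP/setP => x; rewrite !inE.
  case xX: (x \in X) => //=; apply/negbTE/negP => xP.
  by have := subsetP PWX x xP; rewrite !inE xX.
have HX : (av_score A X <= av_score A T)%N.
  have -> : av_score A X = (av_score A (X :|: P) - av_score A P)%N.
    rewrite /av_score sum_union //=; lia.
  apply: leq_trans (leq_subr _ _) _; apply: Topt.
    rewrite subUset XW /=; apply: subset_trans PWX _; exact: subsetDl.
  rewrite cardsU (disjoint_setI0 XP) cards0 cX cP /m; lia.
have HZ : (\sum_(i in Z) #|supporters A i| = av_score A X + av_score A (Z :\: X))%N.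
  rewrite /av_score (big_setID X) /=.
  by have -> : Z :&: X = X by apply/setIidPr.
have cZX : (#|Z :\: X| <= #|W|)%N.
  rewrite cardsD; have -> : Z :&: X = X by apply/setIidPr.
  rewrite cX /m; lia.
have HR : (av_score A (Z :\: X) <= #|W| * s)%N.
  have ZXW : Z :\: X \subset ~: W by apply: subset_trans ZW; apply: subsetDl.
  apply: leq_trans (@av_bound _ _ A _ _ ZXW) _.
  exact: leq_mul.
rewrite -/Z HZ; apply: leq_trans (leq_add H1 (leq_add HX HR)) _; rewrite addnA; exact: leqnn.
Qed.

Local Open Scope ring_scope.

Lemma supp_card (C : finType) (n : nat) (A : 'I_n -> {set C}) c :
  #|supporters A c| = (\sum_(i < n) (c \in A i))%N.
Proof.
rewrite -sum1_card [LHS]big_mkcond /=; apply: eq_bigr => i _.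
by rewrite inE; case: (c \in A i).
Qed.

Lemma afford_bound (R : realType) (C : finType) (n : nat) (A : 'I_n -> {set C})
  (k : nat) (W : {set C}) :
  (0 < n)%N -> (0 < k)%N -> affordable R A k W ->
  (#|W| * n <= k * av_score A W)%N.
Proof.
move=> n0 k0 [p [p0 pA pS pW _]].
have Hc : forall c, c \in W -> (n <= #|supporters A c| * k)%N.
  move=> c cW.
  have H1 : (1 : R) <= #|supporters A c|%:R * (k%:R / n%:R).
    rewrite -[X in X <= _](pW c cW) supp_card natr_sum mulr_suml.
    apply: ler_sum => i _.
    case cA: (c \in A i); last by rewrite pA ?cA // mul0r.
    rewrite mul1r; apply: le_trans (pS i).
    rewrite (bigD1 c) //= lerDl; apply: sumr_ge0 => j _; exact: p0.
  have nR : (0 : R) < n%:R by rewrite ltr0n.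
  rewrite -(ler_nat R) natrM.
  move: H1; rewrite mulrA ler_pdivlMr // mul1r. done.
rewrite /av_score big_distrr /= -sum_nat_const.
apply: leq_sum => c cW; rewrite mulnC; exact: Hc.
Qed.

Lemma max_wit (C : finType) (n : nat) (A : 'I_n -> {set C}) (W : {set C}) :
  (0 < \max_(c | c \notin W) #|supporters A c|)%N ->
  exists c, c \notin W /\ #|supporters A c| = \max_(c | c \notin W) #|supporters A c|.
Proof.
case: (pickP (fun c => c \notin W)) => [c0 Hc0 | H0]; last first.
  by rewrite big_pred0.
have : (0 < #|[pred c | c \notin W]|)%N by apply/card_gt0P; exists c0.
case/(eq_bigmax_cond (fun c => #|supporters A c|)) => c cin E _.
exists c; split; first by move: cin; rewrite inE.
by rewrite -E.
Qed.

Lemma key_real (R : realType) (g M K a w s k n l : R) :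
  0 < g -> 2 <= g * (M * M) -> 0 <= M -> 0 <= K -> K * K = k -> 0 < k -> 0 < n ->
  0 <= w -> w <= k -> 0 <= s -> 0 <= a -> w * n <= k * a -> g * l * s <= a ->
  s * k <= 2 * l * n -> 0 <= l -> w * s <= M * K * a.
Proof.
move=> g0 gM M0 K0 KK k0 n0 w0 wk s0 a0 h1 h2 h3 l0.
have e1 : w * n * a <= k * a * a by nra.
have e2 : w * n * (g * l * s) <= w * n * a.
  by apply: ler_wpM2l => //; rewrite !mulr_ge0 // ltW.
have e3 : w * g * s * (s * k) <= w * g * s * (2 * l * n).
  by apply: ler_wpM2l => //; rewrite !mulr_ge0 // ltW.
have e4 : k * (w * g * s * s) <= k * (2 * a * a) by move: e1 e2 e3; clear; nra.
have e4' : w * g * s * s <= 2 * a * a.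
  by move: e4; rewrite ler_pM2l.
have e5 : (w * s) * (w * s) <= k * w * s * s.
  have : w * w <= k * w by nra.
  nra.
have e6 : g * ((w * s) * (w * s)) <= g * ((M * K * a) * (M * K * a)).
  have : g * (k * w * s * s) <= k * (2 * a * a) by nra.
  have kaa : 0 <= k * (a * a) by rewrite !mulr_ge0 // ltW.
  have : k * (2 * a * a) <= k * (g * (M * M) * a * a) by move: kaa gM; clear; nra.
  rewrite -KK; nra.
have e7 : (w * s) * (w * s) <= (M * K * a) * (M * K * a) by move: e6; rewrite ler_pM2l.
have : 0 <= M * K * a by rewrite !mulr_ge0.
nra.
Qed.

Theorem corollary1 (R : realType) (f : nat -> R) :
  (exists gamma : R, 0 < gamma /\
     exists l0 : nat, forall l : nat, (l0 <= l)%N -> gamma * l%:R <= f l) ->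
  exists delta : R, 0 < delta /\
    forall (C : finType) (n : nat) (A : 'I_n -> {set C}) (k : nat),
      (0 < n)%N -> (1 <= k <= #|C|)%N ->
      forall W : {set C}, (#|W| <= k)%N ->
        affordable R A k W -> f_representative f A k W ->
        forall W2 : {set C}, AV_completion A k W W2 ->
          delta / Num.sqrt (k%:R) * (opt_sw A k)%:R <= (sw A W2)%:R.
Proof.
move=> [g [g0 [l0 Hg]]].
pose L := maxn 1 l0.
have L1 : (1 <= L)%N by rewrite /L leq_maxl.
pose M : R := 1 + 2 / g.
have gM1 : g * M = g + 2.
  by rewrite /M mulrDr mulr1 mulrCA divff ?mulr1 // gt_eqF.
have M1 : 1 <= M by rewrite /M lerDl divr_ge0 // ltW.
have M0 : 0 <= M by apply: le_trans M1.
have gM : 2 <= g * (M * M).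
  rewrite mulrA gM1; nra.
pose D : R := 1 + L%:R + M.
have D0 : 0 < D by rewrite /D; have : (0 : R) <= L%:R by []; lra.
exists D^-1; split; first by rewrite invr_gt0.
move=> C n A k n0 /andP[k1 kC] W Wk Haff Hrep W2 [T [-> TW cT Topt]].
set a := av_score A W. set t := av_score A T.
set s := (\max_(c | c \notin W) #|supporters A c|)%N.
set w := #|W|.
have Hsw : sw A (W :|: T) = (a + t)%N.
  rewrite sw_av /av_score sum_union //.
  by rewrite disjoint_sym disjoints_subset.
have Hopt : (opt_sw A k <= a + t + w * s)%N by apply: opt_bound.
have Haf : (w * n <= k * a)%N by exact: (@afford_bound R C n A k W n0 k1 Haff).
pose K : R := Num.sqrt (k%:R).
have K0 : 0 <= K by apply: sqrtr_ge0.
have KK : K * K = k%:R by rewrite -expr2 sqr_sqrtr // ler0n.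
have kR : (1 : R) <= k%:R by rewrite ler1n.
have K1 : 1 <= K by nra.
have Hkey : (w * s)%:R <= (L%:R + M * K) * a%:R.
  have MKa : 0 <= M * K * a%:R by rewrite !mulr_ge0.
  case: (ltnP (s * k) (L * n)) => Hc.
    have h1 : (w * (s * k) <= w * (L * n))%N by rewrite leq_mul // ltnW.
    have h2 : (L * (w * n) <= L * (k * a))%N by rewrite leq_mul.
    have h3 : (w * s <= L * a)%N.
      rewrite -(leq_pmul2r k1) -mulnA; apply: (leq_trans h1); rewrite mulnCA; apply: (leq_trans h2).
      by rewrite mulnA mulnAC.
    apply: le_trans (_ : (L * a)%:R <= _); first by rewrite ler_nat.
    rewrite natrM mulrDl; lra.
  have s0 : (0 < s)%N.
    have : (0 < s * k)%N by apply: leq_trans Hc; rewrite muln_gt0 L1 n0.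
    by rewrite muln_gt0 => /andP[].
  have [c [cW sc]] := @max_wit _ _ A W s0; rewrite -/s in sc.
  have sn : (s <= n)%N by rewrite -sc; apply: leq_trans (max_card _) _; rewrite card_ord.
  have [l [hl1 hl2 hl3 hl4]] : exists l, [/\ (L <= l)%N, (l * n <= s * k)%N,
      (s * k < l.+1 * n)%N & (l <= k)%N].
    exists ((s * k) %/ n)%N; split.
    - by rewrite leq_divRL.
    - exact: leq_divM.
    - exact: ltn_ceil.
    - rewrite -(leq_pmul2r n0); apply: leq_trans (leq_divM _ _) _; by rewrite mulnC leq_mul2l sn orbT.
  have Hf := Hrep c cW l ltac:(by rewrite (leq_trans L1 hl1) hl4) (supporters A c) (subxx _).
  rewrite sc in Hf.
  have sR : (0 : R) < s%:R by rewrite ltr0n.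
  have kR0 : (0 : R) < k%:R by lra.
  have := Hf ltac:(rewrite ler_pdivrMr // -!natrM ler_nat //).
  move=> {}Hf.
  have Hgl := Hg l ltac:(rewrite /L geq_max in hl1; case/andP: hl1 => _ -> //).
  set X := (\sum_(i in supporters A c) #|A i :&: W|)%N in Hf.
  have Xa : (X <= a)%N.
    rewrite /a -sw_av /sw /X [X in (_ <= X)%N](bigID (fun i => i \in supporters A c)) /=.
    exact: leq_addr.
  have gls : g * l%:R * s%:R <= a%:R.
    apply: le_trans (_ : X%:R <= _); last by rewrite ler_nat.
    rewrite -ler_pdivlMr // (mulrC X%:R); exact: le_trans Hgl Hf.
  have := @key_real R g M K a%:R w%:R s%:R k%:R n%:R l%:R g0 gM M0 K0 KK kR0
    ltac:(by rewrite ltr0n) (ler0n _ _) ltac:(by rewrite ler_nat)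
    (ler0n _ _) (ler0n _ _)
    ltac:(by rewrite -!natrM ler_nat) gls
    ltac:(by rewrite -!natrM ler_nat; apply: leq_trans (ltnW hl3) _; rewrite leq_mul2r; apply/orP; right; rewrite mul2n -addnn -addn1 leq_add2l (leq_trans L1 hl1)) (ler0n _ _).
  rewrite natrM mulrDl => h.
  have : 0 <= L%:R * a%:R :> R by rewrite mulr_ge0.
  lra.
rewrite Hsw.
set o := (opt_sw A k)%:R.
set b : R := (a + t)%:R.
have ab : a%:R <= b by rewrite ler_nat leq_addr.
have a0 : (0 : R) <= a%:R by [].
have ob : o <= b + (L%:R + M * K) * a%:R.
  apply: le_trans (_ : (a + t + w * s)%:R <= _); first by rewrite ler_nat.
  rewrite natrD; lra.
have h1 : (L%:R + M * K) * a%:R <= (L%:R + M * K) * b.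
  apply: ler_wpM2l => //; rewrite addr_ge0 ?mulr_ge0 //.
have b0 : 0 <= b by [].
have L0 : (0 : R) <= L%:R by [].
have h2 : L%:R * b <= L%:R * K * b.
  rewrite -mulrA; apply: ler_wpM2l => //; nra.
have h3 : b <= K * b by nra.
have KD : 0 < D * K by rewrite mulr_gt0 //; lra.
have -> : D^-1 / K * o = o / (D * K) by rewrite mulrC invfM.
rewrite ler_pdivrMr // /D; nra.
Qed.
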